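(* Consider a fleet of $N^{\mathrm{B}}$ buildings indexed by $b\in\{1,\dots,N^{\mathrm{B}}\}$, building $b$ having $N_b^{\mathrm{I}}$ zones, over periods $t\in\{1,\dots,N^{\mathrm{T}}\}$. Fix a period $t$, and for each building $b$ fix a current state $\mathbf{T}^{\mathrm{in}}_{b,t-1}\in\mathbb{R}^{N_b^{\mathrm{I}}}$ and a realized exogenous vector $\mathbf{W}_{b,t}\in\mathcal{W}_{b,t}$. Let $\widetilde{\mathcal{U}}_{b,t}$ denote the set of pairs $[\mathbf{T}^{\mathrm{in}}_{b,t};\mathbf{P}^{\mathrm{ac}}_{b,t}]\in\mathbb{R}^{2N_b^{\mathrm{I}}}$ satisfying $\mathbf{A}^{\mathrm{eq}1}_{b,t}\mathbf{T}^{\mathrm{in}}_{b,t-1}+\mathbf{A}^{\mathrm{eq}2}_{b,t}\mathbf{T}^{\mathrm{in}}_{b,t}+\mathbf{A}^{\mathrm{eq}3}_{b,t}\mathbf{P}^{\mathrm{ac}}_{b,t}+\mathbf{A}^{\mathrm{eq}4}_{b,t}\mathbf{W}_{b,t}=\mathbf{b}^{\mathrm{eq}}_{b,t}$, $\mathbf{A}^{\mathrm{ieq}1}_{b,t}\mathbf{T}^{\mathrm{in}}_{b,t}+\mathbf{A}^{\mathrm{ieq}2}_{b,t}\mathbf{P}^{\mathrm{ac}}_{b,t}\le\mathbf{b}^{\mathrm{ieq}}_{b,t}$, and $\mathbf{T}^{\mathrm{in}}_{b,t}\in\mathcal{T}^{\mathrm{aff}}_{b,t}$, where $\mathcal{T}^{\mathrm{aff}}_{b,t}=\mathbf{\Gamma}^{\mathrm{aff}}_{b,t}\{\mathbf{z}:\|\mathbf{z}\|_\infty\le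 1\}+\boldsymbol{\gamma}^{\mathrm{aff}}_{b,t}$ is a polytope satisfying $\mathcal{T}^{\mathrm{aff}}_{b,t}\subseteq\mathcal{T}^{\mathrm{rch}}_{b,t}$. For each $b$, let $[\mathbf{T}^{\mathrm{in},\uparrow}_{b,t};\mathbf{P}^{\mathrm{ac},\uparrow}_{b,t}]$ and $[\mathbf{T}^{\mathrm{in},\downarrow}_{b,t};\mathbf{P}^{\mathrm{ac},\downarrow}_{b,t}]$ be (parts of) an optimal solution of the linear program that maximizes $P^{\mathrm{bld},\uparrow}_{b,t}-P^{\mathrm{bld},\downarrow}_{b,t}$ subject to $P^{\mathrm{bld},\uparrow}_{b,t}=\sum_{i=1}^{N_b^{\mathrm{I}}}P^{\mathrm{ac},\uparrow}_{b,i,t}$, $P^{\mathrm{bld},\downarrow}_{b,t}=\sum_{i=1}^{N_b^{\mathrm{I}}}P^{\mathrm{ac},\downarrow}_{b,i,t}$, and both $[\mathbf{T}^{\mathrm{in},\uparrow}_{b,t};\mathbf{P}^{\mathrm{ac},\uparrow}_{b,t}]$ and $[\mathbf{T}^{\mathrm{in},\downarrow}_{b,t};\mathbf{P}^{\mathrm{ac},\downarrow}_{b,t}]$ belonging to $\widetilde{\mathcal{U}}_{b,t}$ (with $P^{\mathrm{bld},\uparrow}_{b,t}$, $P^{\mathrm{bld},\downarrow}_{b,t}$ the corresponding optimal values of these sums). Assume $\sum_{b}P^{\mathrm{bld},\uparrow}_{b,t}>\sum_{b}P^{\mathrm{bld},\downarrow}_{b,t}$. Given any $P^{\mathrm{reg}}_t\in\left[\sum_{b=1}^{N^{\mathrm{B}}}P^{\mathrm{bld},\downarrow}_{b,t},\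 \sum_{b=1}^{N^{\mathrm{B}}}P^{\mathrm{bld},\uparrow}_{b,t}\right]$, define $$\lambda_t:=\frac{P^{\mathrm{reg}}_t-\sum_{b=1}^{N^{\mathrm{B}}}P^{\mathrm{bld},\downarrow}_{b,t}}{\sum_{b=1}^{N^{\mathrm{B}}}P^{\mathrm{bld},\uparrow}_{b,t}-\sum_{b=1}^{N^{\mathrm{B}}}P^{\mathrm{bld},\downarrow}_{b,t}}\in[0,1],$$ and for each building $b$ set $$[\mathbf{T}^{\mathrm{in}}_{b,t};\mathbf{P}^{\mathrm{ac}}_{b,t}]=(1-\lambda_t)[\mathbf{T}^{\mathrm{in},\downarrow}_{b,t};\mathbf{P}^{\mathrm{ac},\downarrow}_{b,t}]+\lambda_t[\mathbf{T}^{\mathrm{in},\uparrow}_{b,t};\mathbf{P}^{\mathrm{ac},\uparrow}_{b,t}].$$ Then: (i) for every $b$, $[\mathbf{T}^{\mathrm{in}}_{b,t};\mathbf{P}^{\mathrm{ac}}_{b,t}]\in\widetilde{\mathcal{U}}_{b,t}$, so the thermal dynamics, comfort and power constraints at period $t$ hold; (ii) $\sum_{b=1}^{N^{\mathrm{B}}}\sum_{i=1}^{N_b^{\mathrm{I}}}P^{\mathrm{ac}}_{b,i,t}=P^{\mathrm{reg}}_t$; and (iii) for every $b$, $\mathbf{T}^{\mathrm{in}}_{b,t}\in\mathcal{T}^{\mathrm{rch}}_{b,t}$, i.e., there exists a feasible causal continuation over the remaining horizon for all admissible future realizations of the exogenous inputs. Moreover, this profile depends only on the current states $\mathbf{T}^{\mathrm{in}}_{b,t-1}$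 and current realizations $\mathbf{W}_{b,t}$.
   Context: Model of a multi-zone HVAC building $b$: indoor temperature vector $\mathbf{T}^{\mathrm{in}}_{b,t}\in\mathbb{R}^{N_b^{\mathrm{I}}}$ and HVAC power vector $\mathbf{P}^{\mathrm{ac}}_{b,t}\in\mathbb{R}^{N_b^{\mathrm{I}}}$ (components $P^{\mathrm{ac}}_{b,i,t}$) at period $t$; exogenous input $\mathbf{W}_{b,t}=[T^{\mathrm{out}}_{b,t};Q^{\mathrm{rad}}_{b,t}]\in\mathbb{R}^2$ (outdoor temperature, solar radiation) ranges over the box $\mathcal{W}_{b,t}=\{\mathbf{W}:\underline{\mathbf{W}}_{b,t}\le\mathbf{W}\le\overline{\mathbf{W}}_{b,t}\}$. The per-period constraints are the linear thermal dynamics $\mathbf{A}^{\mathrm{eq}1}_{b,t}\mathbf{T}^{\mathrm{in}}_{b,t-1}+\mathbf{A}^{\mathrm{eq}2}_{b,t}\mathbf{T}^{\mathrm{in}}_{b,t}+\mathbf{A}^{\mathrm{eq}3}_{b,t}\mathbf{P}^{\mathrm{ac}}_{b,t}+\mathbf{A}^{\mathrm{eq}4}_{b,t}\mathbf{W}_{b,t}=\mathbf{b}^{\mathrm{eq}}_{b,t}$ (given matrices/vectors) and the comfort/power limits $\mathbf{A}^{\mathrm{ieq}1}_{b,t}\mathbf{T}^{\mathrm{in}}_{b,t}+\mathbf{A}^{\mathrm{ieq}2}_{b,t}\mathbf{P}^{\mathrm{ac}}_{b,t}\le\mathbf{b}^{\mathrm{ieq}}_{b,t}$ (encoding box bounds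 on each zone temperature and zone power). Backward reachable sets: $\mathcal{T}^{\mathrm{rch}}_{b,N^{\mathrm{T}}}:=\mathbb{R}^{N_b^{\mathrm{I}}}$, and for $t\in\{1,\dots,N^{\mathrm{T}}\}$, $\mathcal{T}^{\mathrm{rch}}_{b,t-1}$ is the set of $\mathbf{T}^{\mathrm{in}}_{b,t-1}$ such that for every $\mathbf{W}_{b,t}\in\mathcal{W}_{b,t}$ there exist $\mathbf{T}^{\mathrm{in}}_{b,t},\mathbf{P}^{\mathrm{ac}}_{b,t}$ satisfying the dynamics equation and limit inequalities at period $t$ together with $\mathbf{T}^{\mathrm{in}}_{b,t}\in\mathcal{T}^{\mathrm{rch}}_{b,t}$. ''Feasible causal continuation over the remaining horizon'' means membership in these reachable sets. *)

(* Defs.v *)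
From HB Require Import structures.
From mathcomp Require Import all_boot all_order all_algebra.
Unset Printing Implicit Defensive.
Import Order.TTheory GRing.Theory Num.Theory.
Local Open Scope ring_scope.

(* Data of one HVAC building: number of zones [nz], and for every period s
   the matrices/vectors of the thermal dynamics (meq s rows), of the
   comfort/power limits (mieq s rows), and the box [Wlo s, Whi s] of
   exogenous inputs W = [T^out; Q^rad] in R^2. *)
Record building (R : realFieldType) := Building {
  nz : nat;
  meq : nat -> nat;
  mieq : nat -> nat;
  Aeq1 : forall s, 'M[R]_(meq s, nz);
  Aeq2 : forall s, 'M[R]_(meq s, nz);
  Aeq3 : forall s, 'M[R]_(meq s, nz);
  Aeq4 : forall s, 'M[R]_(meq s, 2);
  beq  : forall s, 'cV[R]_(meq s);
  Aieq1 : forall s, 'M[R]_(mieq s, nz);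
  Aieq2 : forall s, 'M[R]_(mieq s, nz);
  bieq  : forall s, 'cV[R]_(mieq s);
  Wlo : nat -> 'cV[R]_2;
  Whi : nat -> 'cV[R]_2 }.

Arguments nz {R}. Arguments meq {R}. Arguments mieq {R}.
Arguments Aeq1 {R}. Arguments Aeq2 {R}. Arguments Aeq3 {R}. Arguments Aeq4 {R}.
Arguments beq {R}. Arguments Aieq1 {R}. Arguments Aieq2 {R}. Arguments bieq {R}.
Arguments Wlo {R}. Arguments Whi {R}.

Section Defs.
Context {R : realFieldType}.

Definition mxle {m n} (A B : 'M[R]_(m, n)) : Prop := forall i j, A i j <= B i j.

Definition period_cons (B : building R) (s : nat)
  (Tp T P : 'cV[R]_(nz B)) (W : 'cV[R]_2) : Prop :=
  Aeq1 B s *m Tp + Aeq2 B s *m T + Aeq3 B s *m P + Aeq4 B s *m W = beq B s /\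
  mxle (Aieq1 B s *m T + Aieq2 B s *m P) (bieq B s).

Definition Wset (B : building R) (s : nat) (W : 'cV[R]_2) : Prop :=
  mxle (Wlo B s) W /\ mxle W (Whi B s).

(* reach_aux B NT d = T^rch_{NT - d} (backward recursion from T^rch_NT = R^n) *)
Fixpoint reach_aux (B : building R) (NT d : nat) : 'cV[R]_(nz B) -> Prop :=
  match d with
  | 0 => fun _ => True
  | d'.+1 => fun Tp => forall W, Wset B (NT - d') W ->
      exists T P, period_cons B (NT - d') Tp T P W /\ reach_aux B NT d' T
  end.

Definition Trch (B : building R) (NT t : nat) : 'cV[R]_(nz B) -> Prop :=
  reach_aux B NT (NT - t).

Definition Taff {n k} (G : 'M[R]_(n, k)) (g : 'cV[R]_n) (x : 'cV[R]_n) : Prop :=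
  exists z : 'cV[R]_k, (forall i, `|z i 0| <= 1) /\ x = G *m z + g.

Definition Utilde (B : building R) (s : nat) (Tp : 'cV[R]_(nz B)) (W : 'cV[R]_2)
  {k} (G : 'M[R]_(nz B, k)) (g : 'cV[R]_(nz B)) (T P : 'cV[R]_(nz B)) : Prop :=
  period_cons B s Tp T P W /\ Taff G g T.

Definition Pbld {n} (P : 'cV[R]_n) : R := \sum_(i < n) P i 0.

Definition mixv {n} (l : R) (x y : 'cV[R]_n) : 'cV[R]_n := (1 - l) *: x + l *: y.

End Defs.

(* Main.v *)
Require Import Defs.
From HB Require Import structures.
From mathcomp Require Import all_boot all_order all_algebra.
From mathcomp Require Import ring lra.
Import Order.TTheory GRing.Theory Num.Theory.
Local Open Scope ring_scope.

Section Helpers.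
Context {R : realFieldType}.

Lemma mulmx_mixv m n (A : 'M[R]_(m, n)) l (x y : 'cV[R]_n) :
  A *m mixv l x y = mixv l (A *m x) (A *m y).
Proof. by rewrite /mixv mulmxDr !scalemxAr. Qed.

Lemma mix_eq n l (a x1 x2 y1 y2 e c : 'cV[R]_n) :
  a + x1 + y1 + e = c -> a + x2 + y2 + e = c ->
  a + mixv l x1 x2 + mixv l y1 y2 + e = c.
Proof.
move=> H1 H2; apply/matrixP => i j.
have h1 := congr1 (fun M : 'cV[R]_n => M i j) H1.
have h2 := congr1 (fun M : 'cV[R]_n => M i j) H2.
move: h1 h2; rewrite /= !mxE => h1 h2.
rewrite -h1 in h2 *.
set u := (a i j + x1 i j + y1 i j + e i j) in h2 *.
rewrite -[X in X = _](_ : (1 - l) * u + l * (a i j + x2 i j + y2 i j + e i j) = _).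
  by rewrite h2; ring.
rewrite /u; ring.
Qed.

Lemma mix_le n l (x1 x2 y1 y2 c : 'cV[R]_n) : 0 <= l -> l <= 1 ->
  mxle (x1 + y1) c -> mxle (x2 + y2) c -> mxle (mixv l x1 x2 + mixv l y1 y2) c.
Proof.
move=> l0 l1 H1 H2 i j; have := H1 i j; have := H2 i j; rewrite !mxE => h2 h1.
have e : (1 - l) * x1 i j + l * x2 i j + ((1 - l) * y1 i j + l * y2 i j)
  = (1 - l) * (x1 i j + y1 i j) + l * (x2 i j + y2 i j) by ring.
rewrite e.
have -> : c i j = (1 - l) * c i j + l * c i j by ring.
by apply: lerD; apply: ler_wpM2l; rewrite ?subr_ge0.
Qed.

Lemma Utilde_mix B s Tp W k (G : 'M[R]_(nz B, k)) g T1 P1 T2 P2 l :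
  0 <= l -> l <= 1 ->
  Utilde B s Tp W G g T1 P1 -> Utilde B s Tp W G g T2 P2 ->
  Utilde B s Tp W G g (mixv l T1 T2) (mixv l P1 P2).
Proof.
move=> l0 l1 [[E1 I1] [z1 [Hz1 HT1]]] [[E2 I2] [z2 [Hz2 HT2]]].
split; first split.
- by rewrite !mulmx_mixv; apply: mix_eq.
- by rewrite !mulmx_mixv; apply: mix_le.
- exists (mixv l z1 z2); split.
  + move=> i; rewrite !mxE.
    apply: le_trans (ler_normD _ _) _.
    rewrite !normrM (ger0_norm l0) ger0_norm ?subr_ge0 //.
    apply: (@le_trans _ _ ((1 - l) * 1 + l * 1)); last by rewrite !mulr1 subrK.
by apply: lerD; apply: ler_wpM2l; rewrite ?subr_ge0.
  + rewrite HT1 HT2 mulmx_mixv; apply/matrixP => i j; rewrite !mxE; ring.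
Qed.

Lemma Pbld_mixv n l (x y : 'cV[R]_n) :
  Pbld (mixv l x y) = (1 - l) * Pbld x + l * Pbld y.
Proof.
rewrite /Pbld !mulr_sumr -big_split /=; apply: eq_bigr => i _; by rewrite !mxE.
Qed.

End Helpers.

Theorem proposition2 (R : realFieldType) (NT NB : nat)
  (bld : 'I_NB -> building R) (t : nat) (ht : (1 <= t <= NT)%N)
  (kaff : 'I_NB -> nat)
  (Gam : forall b, 'M[R]_(nz (bld b), kaff b))
  (gam : forall b, 'cV[R]_(nz (bld b)))
  (Haff : forall b x, Taff (Gam b) (gam b) x -> Trch (bld b) NT t x)
  (Tprev : forall b, 'cV[R]_(nz (bld b)))
  (W : 'I_NB -> 'cV[R]_2)
  (HW : forall b, Wset (bld b) t (W b))
  (Tu Pu Td Pd : forall b, 'cV[R]_(nz (bld b)))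
  (Hup : forall b, Utilde (bld b) t (Tprev b) (W b) (Gam b) (gam b) (Tu b) (Pu b))
  (Hdn : forall b, Utilde (bld b) t (Tprev b) (W b) (Gam b) (gam b) (Td b) (Pd b))
  (Hopt : forall b (Tu' Pu' Td' Pd' : 'cV[R]_(nz (bld b))),
      Utilde (bld b) t (Tprev b) (W b) (Gam b) (gam b) Tu' Pu' ->
      Utilde (bld b) t (Tprev b) (W b) (Gam b) (gam b) Td' Pd' ->
      Pbld Pu' - Pbld Pd' <= Pbld (Pu b) - Pbld (Pd b))
  (Hgap : \sum_(b < NB) Pbld (Pd b) < \sum_(b < NB) Pbld (Pu b))
  (Preg : R)
  (HPreg : \sum_(b < NB) Pbld (Pd b) <= Preg <= \sum_(b < NB) Pbld (Pu b)) :
  let lam := (Preg - \sum_(b < NB) Pbld (Pd b)) /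
             (\sum_(b < NB) Pbld (Pu b) - \sum_(b < NB) Pbld (Pd b)) in
  (0 <= lam <= 1) /\
  (forall b, Utilde (bld b) t (Tprev b) (W b) (Gam b) (gam b)
               (mixv lam (Td b) (Tu b)) (mixv lam (Pd b) (Pu b))) /\
  (\sum_(b < NB) Pbld (mixv lam (Pd b) (Pu b)) = Preg) /\
  (forall b, Trch (bld b) NT t (mixv lam (Td b) (Tu b))).
Proof.
move=> lam.
set Sd := \sum_(b < NB) Pbld (Pd b) in Hgap HPreg lam *.
set Su := \sum_(b < NB) Pbld (Pu b) in Hgap HPreg lam *.
move/andP: HPreg => [h1 h2].
have D0 : 0 < Su - Sd by rewrite subr_gt0.
have L0 : 0 <= lam by rewrite /lam divr_ge0 // ?subr_ge0 // ltW.
have L1 : lam <= 1 by rewrite /lam ler_pdivrMr // mul1r lerB.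
have HU : forall b, Utilde (bld b) t (Tprev b) (W b) (Gam b) (gam b)
               (mixv lam (Td b) (Tu b)) (mixv lam (Pd b) (Pu b)).
  by move=> b; apply: Utilde_mix.
split; first by rewrite L0 L1.
split=> //.
split.
  under eq_bigr => b _ do rewrite Pbld_mixv.
  rewrite big_split /= -!mulr_sumr -/Sd -/Su.
  have -> : (1 - lam) * Sd + lam * Su = Sd + lam * (Su - Sd) by ring.
  rewrite /lam mulfVK ?gt_eqF //; ring.
by move=> b; apply: Haff; case: (HU b).
Qed.
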